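(* Let $X=\ell_p$ for some $1\le p<\infty$, or $X=c_0$, considered as a Banach algebra under coordinatewise multiplication. Let $\mathcal A$ be a finitely invariant Furstenberg family, $x_0\in X$ and $m\in\mathbb N$, and let $\lambda\in\mathbb C$ with $|\lambda|>1$. If $x_0^m$ is $\mathcal A$-hypercyclic for $\lambda B$, then so is $\sum_{\nu=m}^N\alpha_\nu x_0^\nu$ for any $N\ge m$ and any $\alpha_m,\ldots,\alpha_N\in\mathbb C$ with $\alpha_m\neq0$.
   Context: $\lambda B(x(1),x(2),x(3),\ldots)=(\lambda x(2),\lambda x(3),\ldots)$; powers are coordinatewise. A Furstenberg family is a non-empty family $\mathcal A$ of subsets of $\mathbb N_0$ with $\varnothing\notin\mathcal A$ and such that $A\in\mathcal A$, $A\subset B\subset\mathbb N_0$ imply $B\in\mathcal A$; it is finitely invariant if $A\in\mathcal A$ implies $A\setminus[0,N]\in\mathcal A$ for all $N\ge0$. A vector $x$ is $\mathcal A$-hypercyclic for an operator $T$ if for every non-empty open $U\subset X$, $\{n\ge0:T^nx\in U\}\in\mathcal A$. *)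

(* Defs.v *)
From Stdlib Require Import Reals.
From Coquelicot Require Import Coquelicot.
Open Scope R_scope.

(* Sequences x = (x(1), x(2), ...) are represented as functions nat -> C,
   index k standing for the coordinate x(k+1). *)
Definition seqC := nat -> C.

Definition rpow (t p : R) : R := if Req_EM_T t 0 then 0 else Rpower t p.

Inductive seqspace : Type :=
  | Lp (p : R)
  | C0.

Definition valid_space (S : seqspace) : Prop :=
  match S with
  | Lp p => 1 <= p
  | C0 => True
  end.

Definition inX (S : seqspace) (x : seqC) : Prop :=
  match S with
  | Lp p => ex_series (fun n => rpow (Cmod (x n)) p)
  | C0 => is_lim_seq (fun n => Cmod (x n)) 0
  end.

(* the norm of X (meaningful for x in X) *)
Definition normX (S : seqspace) (x : seqC) : R :=
  match S with
  | Lp p => rpow (Series (fun n => rpow (Cmod (x n)) p)) (/ p)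
  | C0 => real (Sup_seq (fun n => Cmod (x n)))
  end.

Definition seq_sub (x y : seqC) : seqC := fun n => Cminus (x n) (y n).

Definition openX (S : seqspace) (U : seqC -> Prop) : Prop :=
  (forall x, U x -> inX S x) /\
  (forall x, U x -> exists r, 0 < r /\
      forall y, inX S y -> normX S (seq_sub y x) < r -> U y).

Definition furstenberg_family (A : (nat -> Prop) -> Prop) : Prop :=
  (exists E, A E) /\
  ~ A (fun _ => False) /\
  (forall E F : nat -> Prop, A E -> (forall n, E n -> F n) -> A F).

Definition finitely_invariant (A : (nat -> Prop) -> Prop) : Prop :=
  forall E, A E -> forall N : nat, A (fun n => E n /\ (N < n)%nat).

Definition lamB (lam : C) (x : seqC) : seqC := fun n => Cmult lam (x (S n)).

Definition A_hypercyclic (S : seqspace) (A : (nat -> Prop) -> Prop)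
    (T : seqC -> seqC) (x : seqC) : Prop :=
  inX S x /\
  forall U : seqC -> Prop, openX S U -> (exists u, U u) ->
    A (fun n => U (Nat.iter n T x)).

Fixpoint cpow (z : C) (k : nat) : C :=
  match k with
  | O => RtoC 1
  | S k' => Cmult z (cpow z k')
  end.

Definition seq_pow (x : seqC) (k : nat) : seqC := fun n => cpow (x n) k.

Definition poly_seq (alpha : nat -> C) (m N : nat) (x : seqC) : seqC :=
  fun n => List.fold_right Cplus (RtoC 0)
             (List.map (fun nu => Cmult (alpha nu) (cpow (x n) nu))
                  (List.seq m (S N - m))).

(* Main.v *)
Require Import Defs.
From Stdlib Require Import Reals Lra Lia FunctionalExtensionality.
From Coquelicot Require Import Coquelicot.
Open Scope R_scope.


Lemma Rpower_gt0 a p : 0 < Rpower a p.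
Proof. unfold Rpower; apply exp_pos. Qed.

Lemma rpow_0 p : rpow 0 p = 0.
Proof. unfold rpow; destruct (Req_EM_T 0 0); [reflexivity| congruence]. Qed.

Lemma rpow_nonneg t p : 0 <= rpow t p.
Proof. unfold rpow; destruct (Req_EM_T t 0); [lra| left; apply Rpower_gt0]. Qed.

Lemma rpow_pos t p : 0 < t -> 0 < rpow t p.
Proof. intros; unfold rpow; destruct (Req_EM_T t 0); [lra| apply Rpower_gt0]. Qed.

Lemma rpow_lt a b p : 0 < p -> 0 <= a -> a < b -> rpow a p < rpow b p.
Proof.
  intros Hp Ha Hab. destruct (Req_dec a 0) as [->|Ha0].
  - rewrite rpow_0; apply rpow_pos; lra.
  - unfold rpow; destruct (Req_EM_T a 0); [contradiction|].
    destruct (Req_EM_T b 0); [lra|]. apply Rlt_Rpower_l; lra.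
Qed.

Lemma rpow_le a b p : 0 < p -> 0 <= a -> a <= b -> rpow a p <= rpow b p.
Proof.
  intros Hp Ha [H|H]; [left; apply rpow_lt; auto| subst; lra].
Qed.

Lemma rpow_lt_inv a b p : 0 < p -> 0 <= b -> rpow a p < rpow b p -> a < b.
Proof.
  intros Hp Hb H. destruct (Rlt_or_le a b) as [h|h]; auto.
  exfalso. pose proof (rpow_le b a p Hp Hb h). lra.
Qed.

Lemma rpow_mult a b p : 0 <= a -> 0 <= b -> rpow (a * b) p = rpow a p * rpow b p.
Proof.
  intros Ha Hb. destruct (Req_dec a 0) as [->|Ha0].
  { rewrite Rmult_0_l, rpow_0; ring. }
  destruct (Req_dec b 0) as [->|Hb0].
  { rewrite Rmult_0_r, rpow_0; ring. }
  unfold rpow. destruct (Req_EM_T (a*b) 0) as [e|_].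
  { apply Rmult_integral in e; tauto. }
  destruct (Req_EM_T a 0); [contradiction|]. destruct (Req_EM_T b 0); [contradiction|].
  rewrite Rpower_mult_distr; auto; lra.
Qed.

Lemma rpow_small t p : 1 <= p -> 0 <= t <= 1 -> rpow t p <= t.
Proof.
  intros Hp Ht. destruct (Req_dec t 0) as [->|Ht0]; [rewrite rpow_0; lra|].
  unfold rpow. destruct (Req_EM_T t 0); [contradiction|].
  unfold Rpower. rewrite <- (exp_ln t) at 2 by lra.
  assert (ln t <= 0). { destruct (proj2 Ht) as [h|h]. left; rewrite <- ln_1; apply ln_increasing; lra. subst; rewrite ln_1; lra. }
  destruct (Req_dec (p * ln t) (ln t)) as [e|ne]; [rewrite e; lra|].
  left; apply exp_increasing. nra.
Qed.

Lemma rpow_inv M p : 0 < p -> 0 <= M -> rpow (rpow M (/ p)) p = M.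
Proof.
  intros Hp HM. destruct (Req_dec M 0) as [->|HM0]; [rewrite !rpow_0; reflexivity|].
  unfold rpow at 2. destruct (Req_EM_T M 0); [contradiction|].
  unfold rpow. destruct (Req_EM_T (Rpower M (/p)) 0) as [e|_].
  { pose proof (Rpower_gt0 M (/p)); lra. }
  rewrite Rpower_mult. rewrite Rinv_l by lra. apply Rpower_1; lra.
Qed.

Lemma rpow_cont1 p : 1 <= p -> forall d s, 0 <= d < s ->
  exists eps, 0 < eps /\ rpow (1 + eps) p * d < s.
Proof.
  intros Hp d s Hds. set (d' := (d + s) / 2).
  assert (Hd' : 0 < d' /\ d <= d' /\ d' < s) by (unfold d'; lra).
  set (q := s / d'). assert (Hq : 1 < q).
  { unfold q. apply (Rmult_lt_reg_r d'); [lra|]. field_simplify; lra. }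
  exists (Rpower q (/ (2 * p)) - 1). split.
  - assert (1 < Rpower q (/ (2*p))); [|lra].
    rewrite <- (Rpower_O q) at 1 by lra. apply Rpower_lt; auto.
    apply Rinv_0_lt_compat; lra.
  - replace (1 + (Rpower q (/ (2 * p)) - 1)) with (Rpower q (/ (2 * p))) by ring.
    unfold rpow. destruct (Req_EM_T (Rpower q (/ (2 * p))) 0) as [e|_].
    { pose proof (Rpower_gt0 q (/(2*p))); lra. }
    rewrite Rpower_mult.
    assert (Rpower q (/ (2 * p) * p) < q).
    { rewrite <- (Rpower_1 q) at 2 by lra. apply Rpower_lt; auto.
      replace (/ (2 * p) * p) with (/2) by (field; lra). lra. }
    apply Rle_lt_trans with (Rpower q (/ (2 * p) * p) * d').
    { apply Rmult_le_compat_l; [left; apply Rpower_gt0| lra]. }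
    apply Rlt_le_trans with (q * d'). { apply Rmult_lt_compat_r; lra. }
    unfold q; right; field; lra.
Qed.

Definition Mx (S : seqspace) (x : seqC) : R :=
  match S with
  | Lp p => Series (fun n => rpow (Cmod (x n)) p)
  | C0 => real (Sup_seq (fun n => Cmod (x n)))
  end.

Definition phi (S : seqspace) (t : R) : R :=
  match S with Lp p => rpow t p | C0 => t end.

Lemma phi_nonneg S t : 0 <= t -> 0 <= phi S t.
Proof. destruct S; simpl; intros; auto using rpow_nonneg. Qed.

Lemma phi_le S a b : valid_space S -> 0 <= a -> a <= b -> phi S a <= phi S b.
Proof. destruct S; simpl; intros; auto. apply rpow_le; auto; lra. Qed.

Lemma phi_pos S t : 0 < t -> 0 < phi S t.
Proof. destruct S; simpl; intros; auto using rpow_pos. Qed.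

Lemma phi_mult S a b : 0 <= a -> 0 <= b -> phi S (a * b) = phi S a * phi S b.
Proof. destruct S; simpl; intros; auto using rpow_mult. Qed.

Lemma phi_small S t : valid_space S -> 0 <= t <= 1 -> phi S t <= t.
Proof. destruct S; simpl; intros; auto using rpow_small; lra. Qed.

Lemma phi_0 S : phi S 0 = 0.
Proof. destruct S; simpl; auto using rpow_0. Qed.

Lemma phi_cont1 S : valid_space S -> forall d s, 0 <= d < s ->
  exists eps, 0 < eps /\ phi S (1 + eps) * d < s.
Proof.
  destruct S; simpl; intros.
  - apply rpow_cont1; auto.
  - destruct (Req_dec d 0) as [->|]. exists 1; lra.
    exists ((s / d - 1) / 2). split.
    + assert (1 < s / d); [|lra]. apply (Rmult_lt_reg_r d); [lra|]. field_simplify; lra.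
    + apply (Rmult_lt_reg_r (/d)). apply Rinv_0_lt_compat; lra.
      replace ((1 + (s / d - 1) / 2) * d * / d) with ((1 + s/d)/2) by (field; lra).
      assert (1 < s / d); [|unfold Rdiv in *; lra]. apply (Rmult_lt_reg_r d); [lra|]. field_simplify; lra.
Qed.

Lemma pw_split S a b c eps : valid_space S -> 0 <= a -> 0 <= b -> 0 <= c -> 0 < eps ->
  a <= b + c -> phi S a <= phi S ((1 + eps) * b) + phi S ((1 + / eps) * c).
Proof.
  intros V Ha Hb Hc He H.
  destruct (Rle_or_lt c (eps * b)) as [h|h].
  - pose proof (phi_nonneg S ((1 + / eps) * c)).
    assert (0 <= / eps) by (left; apply Rinv_0_lt_compat; lra).
    pose proof (phi_le S a ((1+eps)*b) V Ha ltac:(nra)). nra.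
  - pose proof (phi_nonneg S ((1 + eps) * b) ltac:(nra)).
    assert (b <= c / eps). { apply (Rmult_le_reg_r eps); auto. field_simplify; lra. }
    pose proof (phi_le S a ((1 + / eps)*c) V Ha). 
    assert (a <= (1 + / eps) * c). { unfold Rdiv in *. nra. }
    assert (phi S a <= phi S ((1 + / eps) * c)) by auto. lra.
Qed.

Lemma Rbar_sup_const (c : R) : Sup_seq (fun _ => Finite c) = c.
Proof.
  apply is_sup_seq_unique. simpl. intros eps. split.
  - intros; simpl; destruct eps; simpl; lra.
  - exists 0%nat; simpl; destruct eps; simpl; lra.
Qed.

Lemma sup_bound (f : nat -> R) B : (forall k, 0 <= f k <= B) ->
  (forall k, f k <= real (Sup_seq (fun n => f n))) /\
  (forall c, (forall k, f k <= c) -> real (Sup_seq (fun n => f n)) <= c).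
Proof.
  intros Hf.
  assert (Hub : forall c, (forall k, f k <= c) -> Rbar_le (Sup_seq (fun n => f n)) c).
  { intros c Hc. rewrite <- (Rbar_sup_const c). apply Sup_seq_le. intros; simpl; auto. }
  assert (Hlb : forall k, Rbar_le (f k) (Sup_seq (fun n => f n))).
  { intros k. apply (Sup_seq_minor_le _ _ k). simpl; lra. }
  assert (HB := Hub B (fun k => proj2 (Hf k))).
  specialize (Hlb) as Hl0. specialize (Hl0 0%nat).
  destruct (Sup_seq (fun n => f n)) as [l| |]; simpl in *; try contradiction.
  split; auto.
Qed.

Lemma lim0_bounded (f : nat -> R) : (forall k, 0 <= f k) -> is_lim_seq f 0 ->
  exists B, 1 <= B /\ forall k, f k <= B.
Proof.
  intros Hf Hl. apply is_lim_seq_spec in Hl.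
  destruct (Hl (mkposreal 1 Rlt_0_1)) as [N0 HN0]. simpl in HN0.
  assert (Hfin : forall n, exists B, 1 <= B /\ forall k, (k < n)%nat -> f k <= B).
  { induction n as [|n [B [HB1 HB]]].
    - exists 1; split; [lra| intros; lia].
    - exists (Rmax B (f n)). split. { eapply Rle_trans; [eauto| apply Rmax_l]. }
      intros k Hk. destruct (Nat.eq_dec k n) as [->|].
      + apply Rmax_r.
      + eapply Rle_trans; [apply HB; lia| apply Rmax_l]. }
  destruct (Hfin N0) as [B [HB1 HB]]. exists B; split; auto.
  intros k. destruct (Nat.lt_ge_cases k N0) as [h|h]; auto.
  specialize (HN0 k h). rewrite Rminus_0_r, Rabs_pos_eq in HN0 by auto. lra.
Qed.

Lemma inX_lim0 S x : valid_space S -> inX S x -> is_lim_seq (fun n => Cmod (x n)) 0.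
Proof.
  destruct S as [p|]; simpl; intros V H; auto.
  apply ex_series_lim_0 in H. apply is_lim_seq_spec in H. apply is_lim_seq_spec.
  intros eps. destruct (H (mkposreal _ (rpow_pos eps p (cond_pos eps)))) as [N0 HN].
  exists N0. intros n Hn. specialize (HN n Hn). simpl in HN.
  rewrite Rminus_0_r, Rabs_pos_eq in HN by apply rpow_nonneg.
  rewrite Rminus_0_r, Rabs_pos_eq by apply Cmod_ge_0.
  apply rpow_lt_inv in HN; auto; [lra| left; apply cond_pos].
Qed.

Lemma Mx_nonneg S x : valid_space S -> inX S x -> 0 <= Mx S x.
Proof.
  intros V H. destruct S as [p|]; simpl in *.
  - apply Rle_trans with (Series (fun _ => 0)).
    + assert (E0 : Series (fun _ : nat => 0) = 0).
      { pose proof (Series_scal_l 0 (fun _ : nat => 0)) as E. rewrite !Rmult_0_l in E. exact E. }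
      lra.
    + apply Series_le; auto. intros; split; [lra| apply rpow_nonneg].
  - destruct (lim0_bounded (fun n => Cmod (x n)) (fun k => Cmod_ge_0 _) H) as [B [_ HB]].
    destruct (sup_bound (fun n => Cmod (x n)) B) as [h _].
    { intros; split; auto using Cmod_ge_0. }
    eapply Rle_trans; [apply Cmod_ge_0| apply (h 0%nat)].
Qed.

Lemma normX_lt S x r : valid_space S -> inX S x -> 0 < r ->
  (normX S x < r <-> Mx S x < phi S r).
Proof.
  intros V H Hr. pose proof (Mx_nonneg S x V H) as HM.
  destruct S as [p|]; simpl in *; [|tauto].
  assert (Hp : 0 < p) by lra. split; intros h.
  - rewrite <- (rpow_inv (Series (fun n => rpow (Cmod (x n)) p)) p) by auto.
    apply rpow_lt; auto. apply rpow_nonneg.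
  - apply (rpow_lt_inv _ _ p); auto; [lra|]. rewrite rpow_inv; auto.
Qed.

Lemma dom S (x y z : seqC) c1 c2 eps : valid_space S -> 0 <= c1 -> 0 <= c2 -> 0 < eps ->
  (forall k, Cmod (x k) <= c1 * Cmod (y k) + c2 * Cmod (z k)) ->
  inX S y -> inX S z ->
  inX S x /\ Mx S x <= phi S ((1 + eps) * c1) * Mx S y + phi S ((1 + / eps) * c2) * Mx S z.
Proof.
  intros V H1 H2 He Hk Hy Hz.
  assert (Hie : 0 < / eps) by (apply Rinv_0_lt_compat; lra).
  destruct S as [p|]; simpl in *.
  - assert (Hp : 0 < p) by lra.
    set (K1 := rpow ((1 + eps) * c1) p). set (K2 := rpow ((1 + / eps) * c2) p).
    assert (Hpw : forall k, 0 <= rpow (Cmod (x k)) p <=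
        K1 * rpow (Cmod (y k)) p + K2 * rpow (Cmod (z k)) p).
    { intros k. split; [apply rpow_nonneg|]. unfold K1, K2.
      rewrite <- !rpow_mult; try (apply Cmod_ge_0); try nra.
      rewrite !Rmult_assoc.
      apply (pw_split (Lp p) _ (c1 * Cmod (y k)) (c2 * Cmod (z k))); simpl; auto; try apply Cmod_ge_0.
      apply Rmult_le_pos; auto; apply Cmod_ge_0.
      apply Rmult_le_pos; auto; apply Cmod_ge_0. }
    assert (Hex : ex_series (fun n => K1 * rpow (Cmod (y n)) p + K2 * rpow (Cmod (z n)) p)).
    { apply (ex_series_plus (fun n => K1 * rpow (Cmod (y n)) p) (fun n => K2 * rpow (Cmod (z n)) p));
      apply (ex_series_scal_l _ (fun n => rpow (Cmod (_ n)) p)); auto. }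
    split.
    + apply (@ex_series_le R_AbsRing R_CompleteNormedModule (fun n => rpow (Cmod (x n)) p) (fun n => K1 * rpow (Cmod (y n)) p + K2 * rpow (Cmod (z n)) p)); [|exact Hex]. intros n. change norm with Rabs; simpl.
      rewrite Rabs_pos_eq; apply Hpw.
    + eapply Rle_trans; [apply Series_le; [apply Hpw| exact Hex]|].
      rewrite Series_plus.
      rewrite !Series_scal_l. lra.
      apply (ex_series_scal_l _ (fun n => rpow (Cmod (_ n)) p)); auto.
      apply (ex_series_scal_l _ (fun n => rpow (Cmod (_ n)) p)); auto.
  - assert (Hlim : is_lim_seq (fun n => Cmod (x n)) 0).
    { apply (is_lim_seq_le_le (fun _ => 0) _ (fun n => c1 * Cmod (y n) + c2 * Cmod (z n))).
      intros; split; auto using Cmod_ge_0.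
      apply is_lim_seq_const.
      replace (Finite 0) with (Finite (c1 * 0 + c2 * 0)) by (f_equal; ring).
      apply is_lim_seq_plus'; apply (is_lim_seq_scal_l _ _ (Finite 0)); auto. }
    split; auto.
    destruct (lim0_bounded _ (fun k => Cmod_ge_0 _) Hy) as [By [_ HBy]].
    destruct (lim0_bounded _ (fun k => Cmod_ge_0 _) Hz) as [Bz [_ HBz]].
    destruct (lim0_bounded _ (fun k => Cmod_ge_0 _) Hlim) as [Bx [_ HBx]].
    destruct (sup_bound (fun n => Cmod (y n)) By) as [hy _]. { intros; split; auto using Cmod_ge_0. }
    destruct (sup_bound (fun n => Cmod (z n)) Bz) as [hz _]. { intros; split; auto using Cmod_ge_0. }
    destruct (sup_bound (fun n => Cmod (x n)) Bx) as [_ hx]. { intros; split; auto using Cmod_ge_0. }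
    assert (0 <= real (Sup_seq (fun n => Cmod (y n)))) by (eapply Rle_trans; [apply Cmod_ge_0| apply (hy 0%nat)]).
    assert (0 <= real (Sup_seq (fun n => Cmod (z n)))) by (eapply Rle_trans; [apply Cmod_ge_0| apply (hz 0%nat)]).
    eapply Rle_trans. apply hx. intros k. eapply Rle_trans. apply Hk.
    apply Rplus_le_compat; apply Rmult_le_compat_l; [auto| apply hy| auto| apply hz].
    apply Rplus_le_compat; apply Rmult_le_compat_r; auto; nra.
Qed.

Lemma Cmod_cpow z k : Cmod (cpow z k) = Cmod z ^ k.
Proof. induction k; simpl; [apply Cmod_1| rewrite Cmod_mult, IHk; ring]. Qed.

Lemma Cmod_minus_le p q : Cmod (Cminus p q) <= Cmod p + Cmod q.
Proof.
  unfold Cminus. eapply Rle_trans; [apply Cmod_triangle|]. rewrite Cmod_opp; lra.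
Qed.

Lemma iter_lamB lam y n : Nat.iter n (lamB lam) y = fun k => Cmult (cpow lam n) (y (k + n)%nat).
Proof.
  induction n; apply functional_extensionality; intros k; simpl.
  - rewrite Nat.add_0_r. ring.
  - rewrite IHn. unfold lamB. replace (k + S n)%nat with (S k + n)%nat by lia. ring.
Qed.

Definition Tsum (alpha : nat -> C) (l : list nat) (z : C) : C :=
  List.fold_right Cplus (RtoC 0) (List.map (fun nu => Cmult (alpha nu) (cpow z nu)) l).

Definition asum (alpha : nat -> C) (l : list nat) : R :=
  List.fold_right Rplus 0 (List.map (fun nu => Cmod (alpha nu)) l).

Lemma asum_nonneg alpha l : 0 <= asum alpha l.
Proof. unfold asum; induction l; simpl; [lra|]. pose proof (Cmod_ge_0 (alpha a)). lra. Qed.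

Lemma Tsum_bound alpha l z q N B :
  (forall nu, List.In nu l -> (q + 1 <= nu <= N)%nat) -> Cmod z <= B -> 1 <= B ->
  Cmod (Tsum alpha l z) <= Cmod z ^ (q + 1) * B ^ N * asum alpha l.
Proof.
  intros Hl Hz HB. induction l as [|nu l IH]; simpl.
  - unfold Tsum; simpl. rewrite Cmod_0. unfold asum; simpl. lra.
  - unfold Tsum, asum in *; simpl.
    eapply Rle_trans; [apply Cmod_triangle|].
    assert (IH' := IH (fun x h => Hl x (or_intror h))).
    assert (Hnu := Hl nu (or_introl eq_refl)).
    rewrite Cmod_mult, Cmod_cpow.
    assert (Cmod z ^ nu <= Cmod z ^ (q + 1) * B ^ N).
    { replace nu with ((q + 1) + (nu - (q + 1)))%nat by lia. rewrite pow_add.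
      apply Rmult_le_compat_l. apply pow_le, Cmod_ge_0.
      eapply Rle_trans. apply pow_incr. split; [apply Cmod_ge_0| exact Hz].
      apply Rle_pow; auto; lia. }
    pose proof (Cmod_ge_0 (alpha nu)).
    assert (Cmod (alpha nu) * Cmod z ^ nu <= Cmod (alpha nu) * (Cmod z ^ (q+1) * B^N)) by (apply Rmult_le_compat_l; auto).
    rewrite Rmult_plus_distr_l. lra.
Qed.

Lemma poly_split alpha m N x k : (m <= N)%nat ->
  poly_seq alpha m N x k =
  Cplus (Cmult (alpha m) (cpow (x k) m)) (Tsum alpha (List.seq (S m) (N - m)) (x k)).
Proof.
  intros H. unfold poly_seq. replace (S N - m)%nat with (S (N - m)) by lia. reflexivity.
Qed.

Lemma inX_affine X (w u : seqC) a : valid_space X -> inX X w -> inX X u ->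
  inX X (fun k => Cminus (Cmult a (w k)) (u k)).
Proof.
  intros V Hw Hu.
  apply (proj1 (dom X _ w u (Cmod a) 1 1 V (Cmod_ge_0 a) ltac:(lra) ltac:(lra)
     ltac:(intros k; rewrite <- Cmod_mult, Rmult_1_l; apply Cmod_minus_le) Hw Hu)).
Qed.

Theorem proposition2p1 :
  forall (X : seqspace) (A : (nat -> Prop) -> Prop) (x0 : seqC) (m : nat)
         (lam : C),
    valid_space X ->
    furstenberg_family A -> finitely_invariant A ->
    inX X x0 -> (1 <= m)%nat -> 1 < Cmod lam ->
    A_hypercyclic X A (lamB lam) (seq_pow x0 m) ->
    forall (N : nat) (alpha : nat -> C),
      (m <= N)%nat -> alpha m <> RtoC 0 ->
      A_hypercyclic X A (lamB lam) (poly_seq alpha m N x0).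
Proof.
  intros X A x0 m lam V HA Hfi Hx0 Hm Hlam Hhyp N alpha HmN Ha.
  destruct Hhyp as [Hxm Hhyp].
  destruct HA as [_ [_ Hmono]].
  set (a := alpha m).
  assert (Ha0 : 0 < Cmod a) by (apply Cmod_gt_0; auto).
  destruct (lim0_bounded _ (fun k => Cmod_ge_0 _) (inX_lim0 X x0 V Hx0)) as [B [HB1 HB]].
  set (Sall := asum alpha (List.seq m (S N - m))).
  set (Srest := asum alpha (List.seq (S m) (N - m))).
  assert (HSall : 0 <= Sall) by apply asum_nonneg.
  assert (HSrest : 0 <= Srest) by apply asum_nonneg.
  assert (HBN : 1 <= B ^ N). { clear -HB1. induction N; simpl; nra. }
  split.
  { refine (proj1 (dom X _ x0 x0 (B ^ N * Sall) 0 1 V ltac:(nra) ltac:(lra) ltac:(lra)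
       _ Hx0 Hx0)).
    intros k. rewrite Rmult_0_l, Rplus_0_r.
    change (Cmod (Tsum alpha (List.seq m (S N - m)) (x0 k)) <= B ^ N * Sall * Cmod (x0 k)).
    eapply Rle_trans. apply (Tsum_bound _ _ _ 0 N B); auto.
    { intros nu Hnu. apply List.in_seq in Hnu. lia. }
    right. change (0 + 1)%nat with 1%nat. rewrite pow_1. unfold Sall. ring. }
  intros U [Usub Uopen] [u Uu].
  destruct (Uopen u Uu) as [r [Hr Hball]].
  pose proof (Usub u Uu) as Hu.
  set (Mu := Mx X u).
  assert (HMu : 0 <= Mu) by (apply Mx_nonneg; auto).
  assert (Hphi4 : 0 < phi X 4) by (apply phi_pos; lra).
  assert (Hphir : 0 < phi X r) by (apply phi_pos; lra).
  set (s := phi X r / (2 * phi X 4)).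
  assert (Hs : 0 < s) by (unfold s; apply Rdiv_lt_0_compat; lra).
  set (Vs := fun w => inX X w /\ Mx X (fun k => Cminus (Cmult a (w k)) (u k)) < s).
  assert (HVopen : openX X Vs).
  { split; [intros w [h _]; exact h|].
    intros w [Hw Hdw].
    set (dw := Mx X (fun k => Cminus (Cmult a (w k)) (u k))) in *.
    assert (Hdw0 : 0 <= dw) by (apply Mx_nonneg; auto; apply inX_affine; auto).
    destruct (phi_cont1 X V dw s ltac:(lra)) as [eps [Heps Hepsd]].
    set (K := phi X ((1 + / eps) * Cmod a)).
    assert (HK : 0 <= K).
    { apply phi_nonneg. apply Rmult_le_pos; [|apply Cmod_ge_0].
      pose proof (Rinv_0_lt_compat eps Heps); lra. }
    set (gap := s - phi X (1 + eps) * dw).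
    assert (Hgap : 0 < gap) by (unfold gap; lra).
    exists (Rmin 1 (gap / (K + 1))). split.
    { apply Rmin_glb_lt; [lra| apply Rdiv_lt_0_compat; lra]. }
    intros y Hy Hyw. split; auto.
    assert (Hyw' : inX X (seq_sub y w)).
    { apply (proj1 (dom X _ y w 1 1 1 V ltac:(lra) ltac:(lra) ltac:(lra)
         ltac:(intros k; rewrite !Rmult_1_l; apply Cmod_minus_le) Hy Hw)). }
    apply normX_lt in Hyw; auto; [|apply Rmin_glb_lt; [lra| apply Rdiv_lt_0_compat; lra]].
    assert (Hmin : phi X (Rmin 1 (gap / (K + 1))) <= gap / (K + 1)).
    { eapply Rle_trans. apply phi_small; auto.
      split; [left; apply Rmin_glb_lt; [lra| apply Rdiv_lt_0_compat; lra]| apply Rmin_l].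
      apply Rmin_r. }
    destruct (dom X (fun k => Cminus (Cmult a (y k)) (u k)) (fun k => Cminus (Cmult a (w k)) (u k)) (seq_sub y w) 1 (Cmod a) eps V
       ltac:(lra) (Cmod_ge_0 a) Heps) as [_ Hle].
    { intros k. unfold seq_sub. rewrite <- Cmod_mult, Rmult_1_l.
      replace (Cminus (Cmult a (y k)) (u k)) with
        (Cplus (Cminus (Cmult a (w k)) (u k)) (Cmult a (Cminus (y k) (w k)))) by ring.
      apply Cmod_triangle. }
    { apply inX_affine; auto. }
    { exact Hyw'. }
    rewrite Rmult_1_r in Hle. fold dw K in Hle.
    assert (Hyw0 : 0 <= Mx X (seq_sub y w)) by (apply Mx_nonneg; auto).
    assert (K * Mx X (seq_sub y w) <= K * (gap / (K + 1))) by (apply Rmult_le_compat_l; lra).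
    assert (K * (gap / (K + 1)) < gap).
    { apply (Rmult_lt_reg_r (K + 1)); [lra|]. field_simplify; nra. }
    unfold gap in *. lra. }
  assert (HVne : exists w, Vs w).
  { exists (fun k => Cmult (Cinv a) (u k)).
    assert (Hw : inX X (fun k => Cmult (Cinv a) (u k))).
    { refine (proj1 (dom X (fun k => Cmult (Cinv a) (u k)) u u (Cmod (Cinv a)) 0 1 V (Cmod_ge_0 _) ltac:(lra) ltac:(lra)
        _ Hu Hu)). intros k. rewrite <- Cmod_mult, Rmult_0_l, Rplus_0_r. lra. }
    split; auto.
    destruct (dom X (fun k => Cminus (Cmult a (Cmult (Cinv a) (u k))) (u k)) u u 0 0 1 V
       ltac:(lra) ltac:(lra) ltac:(lra)) as [_ Hle]; auto.
    { intros k. replace (Cminus (Cmult a (Cmult (Cinv a) (u k))) (u k)) with (RtoC 0)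
        by (field; auto). rewrite Cmod_0. lra. }
    rewrite !Rmult_0_r, phi_0 in Hle. lra. }
  specialize (Hhyp Vs HVopen HVne).
  set (tau := Rmin 1 (phi X r / (2 * (Mu + 1)))).
  assert (Htau : 0 < tau) by (apply Rmin_glb_lt; [lra| apply Rdiv_lt_0_compat; lra]).
  set (delta := tau * Cmod a / (2 * (B ^ N * Srest + 1))).
  assert (Hdelta : 0 < delta).
  { unfold delta. apply Rdiv_lt_0_compat; [nra| nra]. }
  pose proof (inX_lim0 X x0 V Hx0) as Hlim. apply is_lim_seq_spec in Hlim.
  destruct (Hlim (mkposreal delta Hdelta)) as [n0 Hn0]. simpl in Hn0.
  apply (Hmono (fun n => Vs (Nat.iter n (lamB lam) (seq_pow x0 m)) /\ (n0 < n)%nat)).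
  { apply (Hfi _ Hhyp n0). }
  intros n [[Hwin Hdw] Hn].
  rewrite iter_lamB in Hwin, Hdw |- *.
  set (w := fun k => Cmult (cpow lam n) (seq_pow x0 m (k + n)%nat)) in *.
  set (t := fun k => Cmult (cpow lam n) (poly_seq alpha m N x0 (k + n)%nat)).
  set (d := fun k => Cminus (Cmult a (w k)) (u k)) in *.
  set (eta := delta * B ^ N * Srest).
  set (e := eta / Cmod a).
  assert (He0 : 0 <= e) by (unfold e, eta; apply Rmult_le_pos; [apply Rmult_le_pos; [apply Rmult_le_pos|]; lra| left; apply Rinv_0_lt_compat; lra]).
  assert (Hetau : e <= tau / 2).
  { unfold e, eta, delta. apply (Rmult_le_reg_r (Cmod a)); auto.
    replace (tau * Cmod a / (2 * (B ^ N * Srest + 1)) * B ^ N * Srest / Cmod a * Cmod a)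
      with (tau * Cmod a / 2 * ((B ^ N * Srest) / (B ^ N * Srest + 1))) by (field; nra).
    replace (tau / 2 * Cmod a) with (tau * Cmod a / 2 * 1) by field.
    apply Rmult_le_compat_l. nra.
    apply (Rmult_le_reg_r (B ^ N * Srest + 1)); [nra|]. field_simplify; nra. }
  assert (Htau1 : tau <= 1) by apply Rmin_l.
  assert (Htau2 : tau <= phi X r / (2 * (Mu + 1))) by apply Rmin_r.
  assert (Hpw : forall k, Cmod (seq_sub t u k) <= (1 + e) * Cmod (d k) + e * Cmod (u k)).
  { intros k. unfold seq_sub, t, d, w. rewrite poly_split by auto.
    unfold seq_pow. fold a.
    set (z := x0 (k + n)%nat). set (T := Tsum alpha (List.seq (S m) (N - m)) z).
    replace (Cminus (Cmult (cpow lam n) (Cplus (Cmult a (cpow z m)) T)) (u k)) with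
      (Cplus (Cminus (Cmult a (Cmult (cpow lam n) (cpow z m))) (u k)) (Cmult (cpow lam n) T)) by ring.
    eapply Rle_trans; [apply Cmod_triangle|].
    set (dk := Cmod (Cminus (Cmult a (Cmult (cpow lam n) (cpow z m))) (u k))).
    assert (Hz : Cmod z < delta).
    { specialize (Hn0 (k + n)%nat ltac:(lia)). rewrite Rminus_0_r, Rabs_pos_eq in Hn0 by apply Cmod_ge_0. exact Hn0. }
    assert (HT : Cmod T <= Cmod z ^ (m + 1) * B ^ N * Srest).
    { apply (Tsum_bound _ _ _ m N B); [intros nu Hnu; apply List.in_seq in Hnu; lia | apply HB | exact HB1]. }
    set (wk := Cmod (Cmult (cpow lam n) (cpow z m))).
    assert (Hwk : wk = Cmod lam ^ n * Cmod z ^ m) by (unfold wk; rewrite Cmod_mult, !Cmod_cpow; reflexivity).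
    assert (HlT : Cmod (Cmult (cpow lam n) T) <= wk * eta).
    { rewrite Cmod_mult, Cmod_cpow, Hwk. unfold eta.
      assert (0 <= Cmod lam ^ n) by (apply pow_le, Cmod_ge_0).
      assert (0 <= Cmod z ^ m) by (apply pow_le, Cmod_ge_0).
      assert (HT' : Cmod T <= Cmod z ^ m * (delta * B ^ N * Srest)).
      { eapply Rle_trans; [exact HT|]. rewrite pow_add, pow_1.
        replace (Cmod z ^ m * Cmod z * B ^ N * Srest) with (Cmod z ^ m * (Cmod z * (B ^ N * Srest))) by ring.
        replace (Cmod z ^ m * (delta * B ^ N * Srest)) with (Cmod z ^ m * (delta * (B ^ N * Srest))) by ring.
        apply Rmult_le_compat_l; auto. apply Rmult_le_compat_r; [nra| lra]. }
      eapply Rle_trans; [apply Rmult_le_compat_l; [auto| exact HT']|]. right; ring. }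
    assert (Hwa : wk * Cmod a <= dk + Cmod (u k)).
    { unfold wk, dk. rewrite <- Cmod_mult.
      replace (Cmult (Cmult (cpow lam n) (cpow z m)) a) with
        (Cplus (Cminus (Cmult a (Cmult (cpow lam n) (cpow z m))) (u k)) (u k)) by ring.
      apply Cmod_triangle. }
    assert (wk * eta = (wk * Cmod a) * e) by (unfold e; field; lra).
    assert ((wk * Cmod a) * e <= (dk + Cmod (u k)) * e) by (apply Rmult_le_compat_r; auto).
    lra. }
  assert (Hd : inX X d) by (apply inX_affine; auto).
  destruct (dom X (seq_sub t u) d u (1 + e) e 1 V ltac:(lra) He0 ltac:(lra) Hpw Hd Hu)
    as [Htu Hle].
  assert (Ht : inX X t).
  { refine (proj1 (dom X t (seq_sub t u) u 1 1 1 V ltac:(lra) ltac:(lra) ltac:(lra)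
       _ Htu Hu)).
    intros k. rewrite !Rmult_1_l. unfold seq_sub.
    replace (t k) with (Cplus (Cminus (t k) (u k)) (u k)) at 1 by ring. apply Cmod_triangle. }
  apply Hball; auto.
  apply normX_lt; auto.
  replace (/ 1) with 1 in Hle by field.
  assert (H1 : phi X ((1 + 1) * (1 + e)) <= phi X 4) by (apply phi_le; auto; lra).
  assert (H2 : phi X ((1 + 1) * e) <= phi X r / (2 * (Mu + 1))).
  { eapply Rle_trans. apply phi_small; auto; lra. lra. }
  assert (HMd : 0 <= Mx X d) by (apply Mx_nonneg; auto).
  assert (phi X ((1 + 1) * (1 + e)) * Mx X d <= phi X 4 * Mx X d) by (apply Rmult_le_compat_r; auto).
  assert (phi X 4 * Mx X d < phi X 4 * s) by (apply Rmult_lt_compat_l; auto).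
  assert (phi X ((1 + 1) * e) * Mu <= phi X r / (2 * (Mu + 1)) * Mu) by (apply Rmult_le_compat_r; auto).
  assert (phi X r / (2 * (Mu + 1)) * Mu <= phi X r / 2).
  { apply (Rmult_le_reg_r (2 * (Mu + 1))); [lra|]. field_simplify; nra. }
  assert (phi X 4 * s = phi X r / 2) by (unfold s; field; lra).
  fold Mu in Hle. lra.
Qed.
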